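(* Let $S \subset \mathbb{Z}$ be a finite set, $n \ge 0$, $P \in \mathcal{P}_{2n}(S)$, $u \ge 0$ an integer, and let $R$ be a polynomial of degree at most $u$ with complex coefficients, $R \not\equiv 0$. Suppose $\mathrm{NC}(PR) \le \nu$. Let $v := \lfloor 16u\log\log(u+3)\rfloor$, $k := d_v$, and $H(z) := z^k - 1$. Then $$\mathrm{NC}(PH) \le (\nu+1)\big(k + |S|^{u+1} + 3(u+1) + 2\big),$$ where $|S|$ is the number of elements of $S$.
   Context: For $S \subset \mathbb{C}$ and $N\ge0$, $\mathcal{P}_N(S)$ denotes the set of polynomials $P(z)=\sum_{j=0}^N a_j z^j$ with every $a_j \in S$. For a polynomial $F(z)=\sum_j c_j z^j$, $\mathrm{NC}(F)$ is the number of indices $j$ with $c_j\ne0$. $d_v := \mathrm{LCM}(1,2,\dots,v)$ for $v\ge1$, and $d_0 := 1$. *)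

(* Defs.v *)
From Stdlib Require Import Reals ZArith.
From HB Require Import structures.
From mathcomp Require Import all_boot all_order all_algebra.
Set Implicit Arguments. Unset Strict Implicit. Unset Printing Implicit Defensive.
Import Order.TTheory GRing.Theory Num.Theory.
Local Open Scope ring_scope.

Definition NC (C : nzRingType) (F : {poly C}) : nat :=
  count (fun c : C => c != 0) (polyseq F).

Definition poly_of_coefs (C : nzRingType) (N : nat) (a : nat -> int) : {poly C} :=
  \poly_(j < N.+1) ((a j)%:~R : C).

Definition coefs_in (S : seq int) (N : nat) (a : nat -> int) : Prop :=
  forall j : nat, (j <= N)%N -> a j \in S.

Definition vpar (u : nat) : nat :=
  Z.to_nat (Int_part (Rmult (Rmult (IZR (Zpos 16%positive)) (INR u)) (ln (ln (Rplus (INR u) (IZR (Zpos 3%positive))))))).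

Definition dlcm (v : nat) : nat := \big[lcmn/1%N]_(1 <= i < v.+1) i.

(* Main.v *)
Require Import Defs.
From Stdlib Require Import Reals ZArith Lra Lia.

Module RealPart.
Local Open Scope R_scope.

Lemma ln_le' (x y : R) : 0 < x -> x <= y -> ln x <= ln y.
Proof. intros H1 H2. destruct H2 as [H2|H2]. left; apply ln_increasing; auto. subst; lra. Qed.

Lemma exp_small_le (y : R) : 0 < y < 1 -> exp y <= 1 / (1 - y).
Proof.
  intros [H1 H2].
  assert (H : 1 + - y <= exp (- y)) by apply exp_ineq1_le.
  rewrite exp_Ropp in H.
  assert (0 < exp y) by apply exp_pos.
  apply Rmult_le_reg_r with (1 - y); [lra|].
  unfold Rdiv. rewrite Rmult_assoc, Rinv_l by lra.
  apply Rmult_le_reg_r with (/ exp y). apply Rinv_0_lt_compat; lra.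
  rewrite Rmult_assoc, (Rmult_comm (1 - y)), <- Rmult_assoc, Rinv_r by lra.
  lra.
Qed.

Lemma lnln_ge (x : R) : 4 <= x -> 1/8 <= ln (ln x).
Proof.
  intros Hx.
  assert (E1 : exp (1/7) <= 7/6).
  { eapply Rle_trans. apply exp_small_le; lra. lra. }
  assert (E2 : exp (8/7) <= 4).
  { replace (8/7) with (1 + 1/7) by lra. rewrite exp_plus.
    pose proof exp_le_3. assert (0 < exp 1) by apply exp_pos.
    assert (0 < exp (1/7)) by apply exp_pos. nra. }
  assert (L1 : 8/7 <= ln x).
  { rewrite <- (ln_exp (8/7)). apply ln_le'. apply exp_pos. lra. }
  assert (E3 : exp (1/8) <= 8/7).
  { eapply Rle_trans. apply exp_small_le; lra. lra. }
  rewrite <- (ln_exp (1/8)). apply ln_le'. apply exp_pos. lra.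
Qed.

Lemma vpar_ge (u : nat) : (1 <= u)%nat -> (2 * u <= vpar u)%nat.
Proof.
  intros Hu. unfold vpar.
  set (X := (IZR 16 * INR u * ln (ln (INR u + IZR 3)))).
  assert (HX : INR (2 * u) <= X).
  { unfold X. rewrite mult_INR.
    assert (4 <= INR u + IZR 3).
    { assert (1 <= INR u) by (apply (le_INR 1); lia). simpl; lra. }
    pose proof (lnln_ge _ H).
    assert (0 <= INR u) by apply pos_INR. simpl. nra. }
  assert (Hi : (Z.of_nat (2 * u) <= Int_part X)%Z).
  { destruct (base_Int_part X) as [B1 B2].
    assert (IZR (Z.of_nat (2*u)) < IZR (Int_part X) + 1).
    { rewrite <- INR_IZR_INZ. lra. }
    rewrite <- plus_IZR in H. apply lt_IZR in H. lia. }
  lia.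
Qed.

End RealPart.

From HB Require Import structures.
From mathcomp Require Import all_boot all_order all_algebra all_field.
From mathcomp Require Import zify.
Import Order.TTheory GRing.Theory Num.Theory.
Set Implicit Arguments. Unset Strict Implicit. Unset Printing Implicit Defensive.
Local Open Scope ring_scope.

Lemma dvd_dlcm v i : (0 < i)%N -> (i <= v)%N -> (i %| dlcm v)%N.
Proof.
elim: v i => [|v IH] i i0 iv; first by move: i0 iv; case: i.
rewrite /dlcm big_nat_recr //= -/(dlcm v).
rewrite leq_eqVlt in iv; case/orP: iv => [/eqP -> | iv]; first exact: dvdn_lcmr.
exact: dvdn_trans (IH i i0 iv) (dvdn_lcml _ _).
Qed.

Lemma dvd_dlcm_tot w m : (0 < m)%N -> (2 * totient m <= w)%N -> (m %| dlcm w)%N.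
Proof.
elim/ltn_ind: m => m IH m0 hw.
have [m1|m1] := leqP m 1.
  have -> : m = 1%N by apply/eqP; rewrite eqn_leq m1 m0.
  exact: dvd1n.
have pp : prime (pdiv m) by rewrite pdiv_prime.
set p := pdiv m in pp *.
have [m' cop em] := pfactor_coprime pp m0.
set a := logn p m in em.
have a0 : (0 < a)%N by rewrite /a logn_gt0 mem_primes pp m0 /p pdiv_dvd.
have pa1 : (1 < p ^ a)%N by rewrite -{1}(expn0 p) ltn_exp2l ?prime_gt1.
have m'0 : (0 < m')%N by move: m0; rewrite em muln_gt0 => /andP[].
have cop' : coprime m' (p ^ a) by rewrite coprime_sym coprimeXl.
have tm : totient m = (totient m' * totient (p ^ a))%N by rewrite em totient_coprime.
have t1 : (0 < totient m')%N by rewrite totient_gt0.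
have t2 : (0 < totient (p ^ a))%N by rewrite totient_gt0 expn_gt0 prime_gt0.
rewrite em Gauss_dvd //; apply/andP; split.
  apply: IH => //.
    by rewrite em -{1}(muln1 m') ltn_pmul2l.
  apply: leq_trans hw; rewrite leq_pmul2l // tm leq_pmulr //.
apply: dvd_dlcm; first by rewrite expn_gt0 prime_gt0.
apply: leq_trans hw.
have h1 : (p ^ a <= 2 * totient (p ^ a))%N.
  rewrite totient_pfactor // -(prednK a0) expnS /= mulnA leq_pmul2r ?expn_gt0 ?prime_gt0 //.
  have p2 := prime_gt1 pp. lia.
apply: leq_trans h1 _; rewrite leq_pmul2l // tm leq_pmull //.
Qed.

Definition Yh (F : nzRingType) (T : nat) (y : nat -> int) (z : F) : F :=
  \sum_(j < T) (y j)%:~R * z ^+ j.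

Lemma Yh_shift (F : comNzRingType) (T : nat) (y : nat -> int) (z : F) :
  z ^+ T = 1 -> (forall q, y (q + T)%N = y q) ->
  forall s, z ^+ s * Yh T (fun j => y (j + s)%N) z = Yh T y z.
Proof.
move=> zT yT; elim=> [|s IH]; first by rewrite expr0 mul1r /Yh; apply: eq_bigr => j _; rewrite addn0.
rewrite -IH exprSr -mulrA; congr (_ * _).
rewrite /Yh mulr_sumr.
pose g (j : nat) := (y (j + s)%N)%:~R * z ^+ j.
have e1 : \sum_(j < T.+1) g j = \sum_(j < T) g j + g T by rewrite big_ord_recr.
have e2 : \sum_(j < T.+1) g j = g 0%N + \sum_(j < T) g j.+1 by rewrite big_ord_recl.
have gT : g T = g 0%N by rewrite /g zT expr0 addnC yT add0n.
have : \sum_(j < T) g j.+1 = \sum_(j < T) g j.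
  by apply: (addrI (g 0%N)); rewrite -e2 e1 gT addrC.
rewrite /g => <-; apply: eq_bigr => j _.
by rewrite addSnnS exprS mulrCA.
Qed.

Lemma geo0 (F : idomainType) (z : F) (T : nat) : z ^+ T = 1 -> z != 1 -> \sum_(i < T) z ^+ i = 0.
Proof.
move=> zT z1; have := subrX1 z T; rewrite zT subrr => /esym/eqP.
by rewrite mulf_eq0 subr_eq0 (negbTE z1) /= => /eqP.
Qed.

Lemma periodic_mod (A : Type) (f : nat -> A) (T : nat) :
  (forall q, f (q + T)%N = f q) -> forall q, f q = f (q %% T)%N.
Proof.
move=> fT q; rewrite {1}(divn_eq q T).
elim: (q %/ T)%N => [|n IH]; first by rewrite mul0n add0n.
by rewrite mulSn -addnA addnC fT.
Qed.

Lemma Yh_sub (F : nzRingType) T (y1 y2 : nat -> int) (z : F) :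
  Yh T (fun j => y1 j - y2 j) z = Yh T y1 z - Yh T y2 z.
Proof.
by rewrite /Yh -sumrB; apply: eq_bigr => j _; rewrite intrB mulrBl.
Qed.

Lemma B2 (y : nat -> int) (T d k : nat) (al : nat -> rat) :
  (0 < T)%N -> (forall q, y (q + T)%N = y q) ->
  (exists s, (s < d.+1)%N /\ al s != 0) ->
  (forall q, \sum_(s < d.+1) al s * (y (q + s)%N)%:~R = 0) ->
  (forall m, (0 < m)%N -> (totient m <= d)%N -> (m %| k)%N) ->
  forall q, y (q + k)%N = y q.
Proof.
move=> T0 yT [s0 [s0d als0]] ann hk.
pose w j := y (j + k)%N - y j.
have wT : forall q, w (q + T)%N = w q.
  by move=> q; rewrite /w addnAC !yT.
pose A : {poly rat} := \poly_(s < d.+1) al s.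
have A0 : A != 0.
  apply/eqP => A0; move: als0; have := coef_poly d.+1 al s0.
  by rewrite s0d -/A A0 coef0 => <-; rewrite eqxx.
have sA : (size A <= d.+1)%N by apply: size_poly.
have step1 : forall z : algC, z ^+ T = 1 -> Yh T w z = 0.
  move=> z zT.
  have z0 : z != 0.
    by apply/eqP => z0; move: zT; rewrite z0 expr0n gtn_eqF // => /eqP; rewrite eq_sym oner_eq0.
  set x := z^-1.
  have xT : x ^+ T = 1 by rewrite /x exprVn zT invr1.
  have Hs : forall s, Yh T (fun j => y (j + s)%N) z = x ^+ s * Yh T y z.
    move=> s; rewrite -(Yh_shift zT yT s) mulrA /x exprVn mulVf ?mul1r //.
    by rewrite expf_neq0.
  have Hw : Yh T w z = (x ^+ k - 1) * Yh T y z.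
    by rewrite /w Yh_sub Hs mulrBl mul1r.
  have HA : (map_poly ratr A).[x] * Yh T y z = 0.
    rewrite (horner_coef_wide _ (n := d.+1)); last by rewrite size_map_poly.
    have -> : \sum_(i < d.+1) (map_poly ratr A)`_i * x ^+ i = \sum_(i < d.+1) ratr (al i) * x ^+ i.
      by apply: eq_bigr => i _; rewrite coef_map coef_poly ltn_ord.
    rewrite mulr_suml.
    have -> : \sum_(i < d.+1) ratr (al i) * x ^+ i * Yh T y z
        = \sum_(i < d.+1) ratr (al i) * Yh T (fun j => y (j + i)%N) z.
      by apply: eq_bigr => i _; rewrite Hs mulrA.
    rewrite /Yh.
    have -> : \sum_(i < d.+1) ratr (al i) * (\sum_(j < T) (y (j + i)%N)%:~R * z ^+ j)
       = \sum_(j < T) ratr (\sum_(s < d.+1) al s * (y (j + s)%N)%:~R) * z ^+ j.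
      rewrite (eq_bigr (fun i : 'I_d.+1 => \sum_(j < T) ratr (al i) * (y (j + i)%N)%:~R * z ^+ j)); last first.
        by move=> i _; rewrite mulr_sumr; apply: eq_bigr => j _; rewrite mulrA.
      rewrite exchange_big /=; apply: eq_bigr => j _.
      by rewrite rmorph_sum mulr_suml; apply: eq_bigr => i _; rewrite rmorphM /= ratr_int.
    by rewrite big1 // => j _; rewrite ann rmorph0 mul0r.
  have [Y0 | Y0] := eqVneq (Yh T y z) 0; first by rewrite Hw Y0 mulr0.
  have rA : root (map_poly ratr A) x.
    by move: HA => /eqP; rewrite mulf_eq0 (negbTE Y0) orbF.
  have [m pm mT] := prim_order_exists T0 xT.
  have [p [mp _] dvp] := minCpolyP x.
  have pA : (p %| A)%R by rewrite -dvp.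
  have sp : size p = (totient m).+1.
    by rewrite -(size_map_poly (ratr : {rmorphism rat -> algC}) p) -mp (minCpoly_cyclotomic pm) size_cyclotomic.
  have tm : (totient m <= d)%N.
    by have := dvdp_leq A0 pA; rewrite sp => h; rewrite -ltnS; apply: leq_trans h sA.
  have mk := hk m (prim_order_gt0 pm) tm.
  have : x ^+ k == 1 by rewrite -(prim_order_dvd pm).
  by rewrite Hw => /eqP ->; rewrite subrr mul0r.
have [om pom] := C_prim_root_exists T0.
have omT : om ^+ T = 1 := prim_expr_order pom.
have step2 : forall l, (l < T)%N -> w l = 0.
  move=> l lT.
  have E0 : \sum_(i < T) (om ^+ i) ^+ (T - l) * Yh T w (om ^+ i) = 0.
    by rewrite big1 // => i _; rewrite step1 ?mulr0 // exprAC omT expr1n.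
  have E1 : \sum_(i < T) (om ^+ i) ^+ (T - l) * Yh T w (om ^+ i)
      = \sum_(j < T) (w j)%:~R * \sum_(i < T) (om ^+ (T - l + j)) ^+ i.
    rewrite /Yh.
    rewrite (eq_bigr (fun i : 'I_T => \sum_(j < T) (w j)%:~R * (om ^+ (T - l + j)) ^+ i)); last first.
      move=> i _; rewrite mulr_sumr; apply: eq_bigr => j _.
      by rewrite mulrCA -!exprM -exprD (mulnC i) (mulnC i) -mulnDl mulnC exprM.
    by rewrite exchange_big /=; apply: eq_bigr => j _; rewrite mulr_sumr.
  have E2 : \sum_(j < T) (w j)%:~R * \sum_(i < T) (om ^+ (T - l + j)) ^+ i
      = (w l)%:~R * T%:R.
    rewrite (bigD1 (Ordinal lT)) //= [X in _ + X]big1 ?addr0.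
      have -> : (T - l + l)%N = T by rewrite subnK // ltnW.
      by rewrite omT (eq_bigr (fun _ => 1)) ?sumr_const ?card_ord // => i _; rewrite expr1n.
    move=> j jl; rewrite geo0 ?mulr0 //.
      by rewrite exprAC omT expr1n.
    rewrite -(prim_order_dvd pom).
    apply/negP => hd; move: jl; rewrite -val_eqE /= => /negP; apply.
    have jT := ltn_ord j.
    have [h|h] := leqP l j.
      have e : (T - l + j)%N = (T + (j - l))%N by lia.
      move: hd; rewrite e dvdn_addr ?dvdnn // => hd.
      case: (posnP (j - l)) => [h0|h0]; first by apply/eqP; lia.
      have := dvdn_leq h0 hd; lia.
    have h0 : (0 < T - l + j)%N by lia.
    have := dvdn_leq h0 hd; lia.
  move: E0; rewrite E1 E2 => /eqP; rewrite mulf_eq0 pnatr_eq0 intr_eq0.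
  case/orP => [/eqP //| /eqP T00]; by move: T0; rewrite T00.
move=> q; apply/eqP; rewrite -subr_eq0; apply/eqP.
by rewrite -/(w q) (periodic_mod wT) step2 // ltn_mod.
Qed.

Lemma periodic_shift (y : nat -> int) T : (0 < T)%N -> (forall q, y (q + T)%N = y q) ->
  forall q s, y (q + s)%N = y (q %% T + s)%N.
Proof.
move=> T0 yT q s.
have pm : forall q, y q = y (q %% T)%N.
  move=> q'; rewrite {1}(divn_eq q' T); elim: (q' %/ T)%N => [|n IH]; first by rewrite mul0n add0n.
  by rewrite mulSn -addnA addnC yT.
by rewrite pm (pm (q %% T + s)%N) modnDml.
Qed.

Lemma B1 (C : numClosedFieldType) (y : nat -> int) (T d : nat) (rho : nat -> C) :
  (0 < T)%N -> (forall q, y (q + T)%N = y q) ->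
  (exists s, (s < d.+1)%N /\ rho s != 0) ->
  (forall q, \sum_(s < d.+1) rho s * (y (q + s)%N)%:~R = 0) ->
  exists al : nat -> rat, (exists s, (s < d.+1)%N /\ al s != 0) /\
     (forall q, \sum_(s < d.+1) al s * (y (q + s)%N)%:~R = 0).
Proof.
move=> T0 yT [s0 [s0d rs0]] ann.
pose M : 'M[rat]_(d.+1, T) := \matrix_(s, j) (y (j + s)%N)%:~R.
pose v : 'rV[C]_(d.+1) := \row_s rho s.
have v0 : v != 0.
  apply/eqP => /rowP /(_ (Ordinal s0d)); rewrite !mxE /= => e; move: rs0; rewrite e eqxx //.
have vM : v *m map_mx (ratr : {rmorphism rat -> C}) M = 0.
  apply/rowP => j; rewrite !mxE -[RHS](ann j); apply: eq_bigr => s _.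
  by rewrite !mxE /= ratr_int.
have nrf : ~~ row_free M.
  apply/negP => rf.
  have rf' : row_free (map_mx (ratr : {rmorphism rat -> C}) M).
    by rewrite /row_free mxrank_map.
  by move: vM => /eqP; rewrite (mulmx_free_eq0 _ rf') (negbTE v0).
have K0 : kermx M != 0 by rewrite kermx_eq0.
have [i ri] : exists i, row i (kermx M) != 0.
  case: (pickP (fun i => row i (kermx M) != 0)) => [i ri|H]; first by exists i.
  exfalso; move/negP: K0; apply; apply/eqP/row_matrixP => i; rewrite row0.
  by have := H i => /negbFE/eqP.
set rv := row i (kermx M) in ri.
have rvM : rv *m M = 0 by rewrite /rv -row_mul mulmx_ker row0.
pose al (s : nat) := if (s < d.+1)%N then rv 0 (inord s) else 0.
have alE : forall s : 'I_d.+1, al s = rv 0 s by move=> s; rewrite /al ltn_ord inord_val.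
exists al; split.
  have [s rs] : exists s, rv 0 s != 0.
    case: (pickP (fun s => rv 0 s != 0)) => [s rs|H]; first by exists s.
    exfalso; move/negP: ri; apply; apply/eqP/rowP => s; rewrite mxE.
    by move: (negbFE (H s)); rewrite /rv !mxE => /eqP ->.
  by exists s; rewrite ltn_ord alE.
move=> q.
have qT : (q %% T < T)%N by rewrite ltn_mod.
have := congr1 (fun A : 'rV[rat]_T => A 0 (Ordinal qT)) rvM; rewrite /= !mxE => e.
apply: etrans e.
apply: eq_bigr => s _; rewrite alE mxE /=.
rewrite [M _ _]mxE /=. by congr (_ * _%:~R); apply: periodic_shift.
Qed.

Fixpoint allseqs (S : seq int) (n : nat) : seq (seq int) :=
  if n is n'.+1 then [seq z :: w | z <- S, w <- allseqs S n'] else [:: [::]].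

Lemma size_allseqs S n : size (allseqs S n) = (size S ^ n)%N.
Proof. by elim: n => [|n IH] //=; rewrite size_allpairs IH expnS. Qed.

Lemma mem_allseqs S n w : size w = n -> all (mem S) w -> w \in allseqs S n.
Proof.
elim: n w => [|n IH] [|z w] //= [sw] /andP[zS wS].
by apply: allpairs_f => //; apply: IH.
Qed.

Lemma det_step (C : numClosedFieldType) (x : nat -> int) (d : nat) (rho : nat -> C) (w1 w2 : nat) :
  rho d != 0 ->
  \sum_(s < d.+1) rho s * (x (w1 + s)%N)%:~R = 0 ->
  \sum_(s < d.+1) rho s * (x (w2 + s)%N)%:~R = 0 ->
  (forall s, (s < d)%N -> x (w1 + s)%N = x (w2 + s)%N) ->
  x (w1 + d)%N = x (w2 + d)%N.
Proof.
move=> rd e1 e2 h.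
rewrite big_ord_recr /= in e1; rewrite big_ord_recr /= in e2.
have : \sum_(i < d) rho i * (x (w1 + i)%N)%:~R = \sum_(i < d) rho i * (x (w2 + i)%N)%:~R.
  by apply: eq_bigr => i _; rewrite h.
move=> es; move: e1; rewrite es => e1.
have : rho d * (x (w1 + d)%N)%:~R = rho d * (x (w2 + d)%N)%:~R.
  by apply: (addrI (\sum_(i < d) rho i * (x (w2 + i)%N)%:~R)); rewrite e1 e2.
by move/(mulfI rd)/intr_inj.
Qed.

Lemma Bmain (C : numClosedFieldType) (y : nat -> int) (T d k : nat) (rho : nat -> C) :
  (0 < T)%N -> (forall q, y (q + T)%N = y q) ->
  (exists s, (s < d.+1)%N /\ rho s != 0) ->
  (forall q, \sum_(s < d.+1) rho s * (y (q + s)%N)%:~R = 0) ->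
  (forall m, (0 < m)%N -> (totient m <= d)%N -> (m %| k)%N) ->
  forall q, y (q + k)%N = y q.
Proof.
move=> T0 yT hr ann hk.
have [al [hal annal]] := B1 T0 yT hr ann.
exact: B2 T0 yT hal annal hk.
Qed.

Lemma periodic_claim (C : numClosedFieldType) (S : seq int) (x : nat -> int) (N d k : nat)
    (rho : nat -> C) :
  (forall j, (j <= N)%N -> x j \in S) -> rho d != 0 -> (0 < k)%N ->
  (forall m, (0 < m)%N -> (totient m <= d)%N -> (m %| k)%N) ->
  forall a l, (l <= N)%N ->
  (forall q, (a <= q)%N -> (q + d <= l)%N -> \sum_(s < d.+1) rho s * (x (q + s)%N)%:~R = 0) ->
  (a + size S ^ d + k + d <= l)%N ->
  x (l - k)%N = x l.
Proof.
move=> xS rd k0 hk a l lN good big.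
set L := (size S ^ d)%N in big.
pose sg q := mkseq (fun s => x (q + s)%N) d.
pose st := map sg (iota a L.+1).
have nu : ~~ uniq st.
  apply/negP => u.
  have := @uniq_leq_size _ st (allseqs S d) u.
  rewrite size_map size_iota size_allseqs -/L ltnn.
  suff hs : {subset st <= allseqs S d} by move=> /(_ hs).
  move=> w /mapP [q]; rewrite mem_iota => /andP [aq qa] ->.
  apply: mem_allseqs; first by rewrite size_mkseq.
  apply/allP => z /mapP [s]; rewrite mem_iota => /andP [_ sd] ->.
  apply: xS; lia.
have [i' [j' [ij jL eq]]] := uniqPn [::] nu.
rewrite size_map size_iota in jL.
have eqs : sg (a + i')%N = sg (a + j')%N.
  by move: eq; rewrite !(nth_map 0%N) ?size_iota ?nth_iota //; lia.
set i := (a + i')%N in eqs; set j := (a + j')%N in eqs.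
set T := (j - i)%N.
have T0 : (0 < T)%N by rewrite /T /i /j; lia.
have per : forall q, (i <= q)%N -> (q + T <= l)%N -> x (q + T)%N = x q.
  elim/ltn_ind=> q IH iq qT.
  have [qd|qd] := ltnP q (i + d).
    have sd : (q - i < d)%N by lia.
    have := congr1 (fun s => nth 0%Z s (q - i)) eqs.
    rewrite /sg !nth_mkseq //.
    have -> : (i + (q - i))%N = q by lia.
    have -> : (j + (q - i))%N = (q + T)%N by rewrite /T /i /j; lia.
    by move=> ->.
  have e1 : (q - d + d)%N = q by lia.
  have e2 : (q - d + T + d)%N = (q + T)%N by lia.
  rewrite -e2 -[in RHS]e1; symmetry; apply: (det_step (rho := rho)) => //.
  - apply: good; rewrite /i in qd; lia.
  - apply: good; rewrite /i in qd; lia.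
  move=> s sd; rewrite addnAC; symmetry; apply: IH; lia.
pose y w := x (i + w %% T)%N.
have yT : forall w, y (w + T)%N = y w by move=> w; rewrite /y modnDr.
have rep : forall w, (i + w <= l)%N -> x (i + w)%N = y w.
  elim/ltn_ind=> w IH iw.
  have [wT|wT] := ltnP w T; first by rewrite /y modn_small.
  have -> : (i + w)%N = (i + (w - T) + T)%N by lia.
  rewrite per; [|lia|lia].
  rewrite IH; [|lia|lia].
  by rewrite /y -(modnDr (w - T)) subnK.
have ann : forall w, \sum_(s < d.+1) rho s * (y (w + s)%N)%:~R = 0.
  move=> w.
  have wT : (w %% T < T)%N by rewrite ltn_mod.
  apply: etrans (good (i + w %% T)%N _ _); last 2 first.
  - rewrite /i; lia.
  - rewrite /T /i /j in wT *; lia.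
  apply: eq_bigr => s _; congr (_ * _%:~R).
  rewrite -addnA rep; last by rewrite /T /i /j in wT *; have := ltn_ord s; lia.
  by apply: periodic_shift.
have hB := Bmain T0 yT (ex_intro _ d (conj (ltnSn d) rd)) ann hk.
have il : (i + k + d <= l)%N by rewrite /i /j in jL *; lia.
have e1 : x l = y (l - i)%N.
  by rewrite -rep; [congr x; lia | lia].
have e2 : x (l - k)%N = y (l - k - i)%N.
  by rewrite -rep; [congr x; lia | lia].
rewrite e1 e2; have -> : (l - i)%N = (l - k - i + k)%N by lia.
by rewrite hB.
Qed.

Lemma NC_iota (R : nzRingType) (F : {poly R}) :
  NC F = count (fun i => (F`_i != 0)%R) (iota 0 (size F)).
Proof. by rewrite /NC -{1}(mkseq_nth 0 F) /mkseq count_map. Qed.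

Lemma cnt_le (R : nzRingType) (F : {poly R}) m :
  (count (fun i => (F`_i != 0)%R) (iota 0 m) <= NC F)%N.
Proof.
rewrite NC_iota; have [ms|ms] := leqP m (size F).
  by rewrite -(subnKC ms) iotaD count_cat leq_addr.
rewrite -(subnKC (ltnW ms)) iotaD count_cat /=.
have -> : count (fun i => (F`_i != 0)%R) (iota (0 + size F) (m - size F)) = 0%N.
  apply/eqP; rewrite eqn0Ngt -has_count; apply/hasPn => i.
  by rewrite mem_iota => /andP [hi _]; rewrite nth_default ?eqxx.
by rewrite addn0.
Qed.

Lemma cnt_ge (R : nzRingType) (F : {poly R}) m : (size F <= m)%N ->
  (NC F <= count (fun i => (F`_i != 0)%R) (iota 0 m))%N.
Proof. by move=> ms; rewrite NC_iota -(subnKC ms) iotaD count_cat leq_addr. Qed.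

Lemma count_interval (p : pred nat) lo M n :
  (forall l, p l -> (lo <= l <= lo + M)%N) -> (count p (iota 0 n) <= M.+1)%N.
Proof.
move=> hp; rewrite -size_filter.
have -> : M.+1 = size (iota lo M.+1) by rewrite size_iota.
apply: uniq_leq_size; first by rewrite filter_uniq // iota_uniq.
move=> l; rewrite mem_filter => /andP [pl _]; rewrite mem_iota; have := hp l pl; lia.
Qed.

Lemma count_or (p q : pred nat) s : (count (fun l => p l || q l) s <= count p s + count q s)%N.
Proof. by elim: s => //= z s IH; case: (p z); case: (q z) => /=; lia. Qed.

Lemma count_has (B : seq nat) M n :
  (count (fun l => has (fun b => (b <= l <= b + M)%N) B) (iota 0 n) <= size B * M.+1)%N.
Proof.
elim: B => [|b B IH] /=; first by rewrite count_pred0.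
apply: leq_trans (count_or (fun l => (b <= l <= b + M)%N) (fun l => has (fun b => (b <= l <= b + M)%N) B) _) _.
rewrite mulSn leq_add //.
by apply: (@count_interval _ b M n).
Qed.

Lemma count_shift (R : nzRingType) (F : {poly R}) e m :
  (count (fun q => (F`_(q + e) != 0)%R) (iota 0 m) <= NC F)%N.
Proof.
apply: leq_trans (cnt_le F (e + m)).
rewrite iotaD count_cat add0n.
have -> : iota e m = map (addn e) (iota 0 m) by rewrite -iotaDl addn0.
rewrite count_map; apply: leq_trans (leq_addl _ _); apply: eq_leq.
by apply: eq_count => q /=; rewrite addnC.
Qed.

Lemma dlcm_gt0 v : (0 < dlcm v)%N.
Proof.
elim: v => [|v IH]; first by rewrite /dlcm big_geq.
by rewrite /dlcm big_nat_recr //= -/(dlcm v) lcmn_gt0 IH.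
Qed.

Lemma window_id (C : numClosedFieldType) (P Rp : {poly C}) (x : nat -> int) (t e : nat) q :
  (forall j, P`_j = (x j)%:~R) -> size Rp = e.+1 -> (t <= e)%N ->
  (forall i, (i < t)%N -> Rp`_i = 0) ->
  (P * Rp)`_(q + e) = \sum_(s < (e - t).+1) Rp`_(e - s) * (x (q + s)%N)%:~R.
Proof.
move=> Px sR te Rt.
rewrite coefM -(big_mkord xpredT (fun j => P`_j * Rp`_(q + e - j))).
rewrite (big_cat_nat _ (n := q)) //=; last by lia.
rewrite big1_seq ?add0r; last first.
  move=> j; rewrite mem_index_iota => /andP [_ /andP [_ jq]]; rewrite [Rp`_ _]nth_default ?mulr0 //; rewrite sR; lia.
rewrite -{1}[q]add0n big_addn.
have -> : ((q + e).+1 - q = e.+1)%N by lia.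
rewrite (big_cat_nat _ (n := (e - t).+1)) //=; last by lia.
rewrite [X in _ + X]big1_seq ?addr0; last first.
  move=> s; rewrite mem_index_iota => /andP [_ /andP [hs1 hs2]]; rewrite Rt ?mulr0 //; lia.
rewrite big_mkord; apply: eq_bigr => s _.
rewrite Px mulrC; congr (_ * _); first by congr (_`_ _); lia.
by rewrite addnC.
Qed.

Theorem lemma3p9 (C : numClosedFieldType) (S : seq int) (n : nat)
    (a : nat -> int) (u : nat) (Rp : {poly C}) (nu : nat) :
  uniq S ->
  coefs_in S (2 * n) a ->
  (size Rp <= u.+1)%N ->
  Rp != 0 ->
  (NC (poly_of_coefs C (2 * n) a * Rp) <= nu)%N ->
  let k := dlcm (vpar u) in
  (NC (poly_of_coefs C (2 * n) a * ('X^k - 1)) <=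
     (nu + 1) * (k + size S ^ u.+1 + 3 * u.+1 + 2))%N.
Proof.
move=> _ cS sRu R0 hnu /=; set k := dlcm (vpar u).
set P := poly_of_coefs C (2 * n) a in hnu *.
have [P0|P0] := eqVneq P 0.
  by rewrite P0 mul0r /NC polyseq0.
have k0 : (0 < k)%N by apply: dlcm_gt0.
set N := (size P).-1.
have sP : size P = N.+1 by rewrite /N prednK // lt0n size_poly_eq0.
have sP2 : (size P <= (2 * n).+1)%N by apply: size_poly.
pose x j := if (j < size P)%N then a j else 0%Z.
have Px : forall j, P`_j = (x j)%:~R.
  move=> j; rewrite /x; case: ifP => hj; last by rewrite nth_default // leqNgt hj.
  by rewrite /P /poly_of_coefs coef_poly; have -> : (j < (2 * n).+1)%N by lia.
have xS : forall j, (j <= N)%N -> x j \in S.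
  by move=> j hj; rewrite /x sP ltnS hj; apply: cS; lia.
have xN : x N != 0%Z.
  apply/eqP => h; move: P0; rewrite -lead_coef_eq0 lead_coefE -/N Px h => /eqP; apply.
  by rewrite mulr0z.
have xbig : forall j, (N < j)%N -> x j = 0%Z.
  by move=> j hj; rewrite /x sP ltnS leqNgt hj.
set e := (size Rp).-1.
have sR : size Rp = e.+1 by rewrite /e prednK // lt0n size_poly_eq0.
have Re : Rp`_e != 0 by rewrite -lead_coefE lead_coef_eq0.
have hex : exists i, Rp`_i != 0 by exists e.
case: (ex_minnP hex) => t Rt tmin.
have te : (t <= e)%N by apply: tmin.
have Rlt : forall i, (i < t)%N -> Rp`_i = 0.
  by move=> i it; apply/eqP; apply: contraTT it => /tmin; rewrite -leqNgt.
set d := (e - t)%N.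
pose rho (s : nat) := Rp`_(e - s).
have rd : rho d != 0 by rewrite /rho /d subKn.
have de : (d <= u)%N by rewrite /d; lia.
have win : forall q, (P * Rp)`_(q + e) = \sum_(s < d.+1) rho s * (x (q + s)%N)%:~R.
  by move=> q; apply: window_id.
have hk : forall m, (0 < m)%N -> (totient m <= d)%N -> (m %| k)%N.
  move=> m m0 tm.
  have t0 : (0 < totient m)%N by rewrite totient_gt0.
  apply: dvd_dlcm_tot => //.
  have u1 : (1 <= u)%coq_nat by lia.
  have := RealPart.vpar_ge u u1; lia.
pose bad q := ((P * Rp)`_(q + e) != 0).
pose h l := ((if (k <= l)%N then x (l - k)%N else 0%Z) - x l)%Z.
have hcoef : forall l, (P * ('X^k - 1))`_l = (h l)%:~R.
  move=> l; rewrite mulrBr mulr1 coefB coefMXn /h intrB.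
  case: (ltnP l k) => hl; last by rewrite !Px.
  by rewrite Px mulr0z.
have sH : (size (P * ('X^k - 1))%R <= (N + k).+1)%N.
  apply: leq_trans (size_mul_leq _ _) _.
  rewrite -polyC1 size_XnsubC // sP; lia.
pose L := (size S ^ d)%N.
pose M := (L + k + d)%N.
pose B' := [seq q <- iota 0 N | bad q].
have cover : forall l, h l != 0%Z ->
    (l <= M)%N || has (fun b => (b <= l <= b + M)%N) B' || (N <= l <= N + k)%N.
  move=> l hl.
  have [lNk|lNk] := leqP l (N + k); last first.
    exfalso; move: hl; rewrite /h xbig; last by lia.
    have -> : (k <= l)%N by lia.
    by rewrite xbig ?subrr //; lia.
  case: (leqP N l) => [Nl|lN]; first by rewrite !orbT.
  case: (ltnP l k) => [lk|kl].
    have -> : (l <= M)%N by rewrite /M; lia.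
    by [].
  have hxl : x (l - k)%N != x l.
    by move: hl; rewrite /h kl subr_eq0.
  pose Pq q := bad q && (q + d <= l)%N.
  have [hb|hnb] := boolP (has Pq (iota 0 l.+1)).
    have ex : exists q, Pq q by move/hasP: hb => [q _ ?]; exists q.
    have ub : forall q, Pq q -> (q <= l)%N by move=> q /andP [_ ?]; lia.
    case: (ex_maxnP ex ub) => b Pb bmax.
    move/andP: (Pb) => [bb bl].
    apply/orP; left; apply/orP; right; apply/hasP; exists b.
      by rewrite mem_filter bb mem_iota; lia.
    apply/andP; split; first by lia.
    rewrite leqNgt; apply/negP => big.
    move/negP: hxl; apply; apply/eqP.
    apply: (periodic_claim xS rd k0 hk (a := b.+1) (l := l)); first by lia.
      move=> q bq ql; rewrite -win; apply/eqP; apply/negPn/negP => bq'.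
      have : (q <= b)%N by apply: bmax; rewrite /Pq /bad bq' ql.
      lia.
    rewrite /M /L in big; lia.
  apply/orP; left; apply/orP; left.
  rewrite leqNgt; apply/negP => big.
  move/negP: hxl; apply; apply/eqP.
  apply: (periodic_claim xS rd k0 hk (a := 0) (l := l)); first by lia.
    move=> q _ ql; rewrite -win; apply/eqP; apply/negPn/negP => bq'.
    move/hasP: hnb; apply; exists q; first by rewrite mem_iota; lia.
    by rewrite /Pq /bad bq' ql.
  rewrite /M /L in big; lia.
have cnt1 : (NC (P * ('X^k - 1)) <= count (fun l => h l != 0%Z) (iota 0 (N + k).+1))%N.
  apply: leq_trans (cnt_ge sH) _; apply: eq_leq; apply: eq_count => l.
  by rewrite hcoef intr_eq0.
have cnt2 : (count (fun l => h l != 0%Z) (iota 0 (N + k).+1) <=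
      M.+1 + size B' * M.+1 + k.+1)%N.
  apply: leq_trans (sub_count cover _) _.
  apply: leq_trans (count_or _ _ _) _; apply: leq_add.
    apply: leq_trans (count_or _ _ _) _; apply: leq_add.
      by apply: (@count_interval _ 0 M) => l; rewrite add0n.
    exact: count_has.
  exact: (@count_interval _ N k).
have badN : bad N.
  rewrite /bad win big_ord_recl /= big1 ?addr0.
    by rewrite addn0 mulf_neq0 ?intr_eq0 // /rho subn0.
  move=> s _; rewrite xbig; first by rewrite mulr0z mulr0.
  by rewrite /bump leq0n add1n addnS ltnS leq_addr.
have cnt3 : (size B' + 1 <= nu)%N.
  apply: leq_trans hnu.
  apply: leq_trans (count_shift (P * Rp) e N.+1).
  have -> : iota 0 N.+1 = iota 0 N ++ [:: N] by rewrite -addn1 iotaD.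
  rewrite count_cat /= size_filter.
  have -> : (((P * Rp)`_(N + e))%R != 0) = true by [].
  by [].

have S0 : (0 < size S)%N by have := xS N (leqnn N); case: (S) => //.
have LS : (L <= size S ^ u.+1)%N by apply: leq_pexp2l => //; lia.
have hM : (M.+1 <= k + size S ^ u.+1 + 3 * u.+1 + 2)%N by rewrite /M; lia.
apply: leq_trans cnt1 _; apply: leq_trans cnt2 _.
apply: leq_trans (_ : (nu + 1) * M.+1 <= _)%N; last by rewrite leq_mul2l hM orbT.
have : (size B' * M.+1 + M.+1 <= nu * M.+1)%N.
  rewrite addnC -mulSn leq_mul2r; apply/orP; right; by rewrite -addn1.
rewrite mulnDl mul1n; lia.
Qed.
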